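(* Let $\alpha\in(0,1]$, $\lambda_0>0$, $m\in\mathbb N_0$, and for $\lambda\in(0,1)$ let $\mathcal E^{(m)}_\alpha(\lambda,n)$ denote the $n$-th Taylor coefficient at $u=0$ of $\big[1+\lambda(1-u)^{-\alpha}\big]^{-m}$, i.e. $\mathcal E^{(m)}_\alpha(\lambda,n)=\frac1{n!}\sum_{s\ge0}\frac{(-\lambda)^s(m)_s}{s!}(\alpha s)_n$. Then for every $x>0$, with $h=x/n$, $$\lim_{n\to\infty}\frac1h\,\mathcal E^{(m)}_\alpha(\lambda_0h^\alpha,n)=\sum_{s=1}^\infty\frac{(m)_s(-\lambda_0)^sx^{\alpha s-1}}{s!\,\Gamma(\alpha s)}=\frac{d}{dx}E^m_{\alpha,1}(-\lambda_0x^\alpha).$$ Together with the atom at the origin (for the discrete $\delta$ at $n=0$), the limit is the Prabhakar kernel $e^m_{\alpha,0}(-\lambda_0,x)=\delta(x)+\sum_{s\ge1}\frac{(m)_s(-\lambda_0)^sx^{\alpha s-1}}{s!\Gamma(\alpha s)}=D_x[\Theta(x)E^m_{\alpha,1}(-\lambda_0x^\alpha)]$, whose Laplace transform is $(1+\lambda_0s^{-\alpha})^{-m}$.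
   Context: $(c)_s=\Gamma(c+s)/\Gamma(c)$ is the Pochhammer symbol, $(c)_0=1$, $(0)_s=\delta_{s0}$. $E^\gamma_{\alpha,\beta}(z)=\sum_{s\ge0}\frac{(\gamma)_s}{s!}\frac{z^s}{\Gamma(\alpha s+\beta)}$ is the Prabhakar function. $\Theta$ is the Heaviside function with $\Theta(0)=1$, $D_x$ the (distributional) derivative, $\delta$ the Dirac distribution concentrated at $0^+$. *)

(* Defs.v *)
From Stdlib Require Import Reals Factorial.
From Coquelicot Require Import Coquelicot.
Open Scope R_scope.

(* Euler Gamma function, for z > 0 : Gamma z = int_0^oo t^(z-1) e^(-t) dt
   (improper Riemann integral). Only used at positive arguments. *)
Definition Gamma (z : R) : R :=
  RInt_gen (fun t => Rpower t (z - 1) * exp (- t))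
           (at_right 0) (Rbar_locally p_infty).

(* Pochhammer symbol (c)_n = Gamma(c+n)/Gamma(c) = c (c+1) ... (c+n-1);
   (c)_0 = 1 and (0)_n = delta_{n0}. *)
Fixpoint poch (c : R) (n : nat) : R :=
  match n with
  | O => 1
  | S k => poch c k * (c + INR k)
  end.

Definition prabhakar (gam alpha beta z : R) : R :=
  Series (fun s => poch gam s / INR (Factorial.fact s) * z ^ s / Gamma (alpha * INR s + beta)).

Definition Ecoef (m : nat) (alpha lambda : R) (n : nat) : R :=
  / INR (Factorial.fact n) *
  Series (fun s => (- lambda) ^ s * poch (INR m) s / INR (Factorial.fact s) * poch (alpha * INR s) n).

(* Main.v *)
Require Import Defs.
From Stdlib Require Import Reals Factorial Lra Lia Psatz Classical ZArith.
From Coquelicot Require Import Coquelicot.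
Open Scope R_scope.


Lemma Rpower_pos' x y : 0 < Rpower x y.
Proof. unfold Rpower; apply exp_pos. Qed.

Lemma Rpower_bern u p : 0 < u -> 0 <= p <= 1 -> Rpower u p <= 1 + p * (u - 1).
Proof.
  intros Hu Hp. unfold Rpower. set (L := ln u). set (E := exp (p * L)).
  assert (H1 : u = E * exp ((1 - p) * L)).
  { unfold E. rewrite <- exp_plus. replace (p * L + (1 - p) * L) with L by ring.
    unfold L; rewrite exp_ln; auto. }
  assert (H2 : 1 = E * exp (- (p * L))).
  { unfold E. rewrite <- exp_plus. replace (p * L + - (p * L)) with 0 by ring. symmetry; apply exp_0. }
  assert (HE : 0 < E) by apply exp_pos.
  pose proof (exp_ineq1_le ((1 - p) * L)) as Ha.
  pose proof (exp_ineq1_le (- (p * L))) as Hb.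
  assert (u >= E * (1 + (1 - p) * L)) by (rewrite H1; apply Rle_ge, Rmult_le_compat_l; lra).
  assert (1 >= E * (1 + - (p * L))) by (rewrite H2 at 1; apply Rle_ge, Rmult_le_compat_l; lra).
  fold E. nra.
Qed.

Lemma Rpower_tangent t c p : 0 < t -> 0 < c -> 0 <= p <= 1 ->
  Rpower t p <= (1 - p) * Rpower c p + p * Rpower c (p - 1) * t.
Proof.
  intros Ht Hc Hp.
  assert (E1 : Rpower t p = Rpower c p * Rpower (t / c) p).
  { rewrite Rpower_mult_distr; try (apply Rdiv_lt_0_compat; auto); auto.
    f_equal. field. lra. }
  assert (E2 : Rpower c (p - 1) = Rpower c p / c).
  { unfold Rminus. rewrite Rpower_plus, Rpower_Ropp, Rpower_1; auto. }
  rewrite E1, E2.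
  pose proof (Rpower_bern (t/c) p (Rdiv_lt_0_compat _ _ Ht Hc) Hp).
  pose proof (Rpower_pos' c p).
  apply Rle_trans with (Rpower c p * (1 + p * (t / c - 1))).
  apply Rmult_le_compat_l; lra.
  right. field. lra.
Qed.

Lemma ln_lower y : 0 < y -> 1 - / y <= ln y.
Proof.
  intros Hy. pose proof (exp_ineq1_le (- ln y)).
  rewrite exp_Ropp, exp_ln in H; auto. lra.
Qed.

Lemma pow_fact_le_exp y N : 0 <= y -> y ^ N / INR (fact N) <= exp y.
Proof.
  intros Hy. eapply Rle_trans; [| apply (exp_ge_taylor y N Hy)].
  destruct N. simpl. lra.
  rewrite tech5. assert (0 <= sum_f_R0 (fun k => y ^ k / INR (fact k)) N).
  { apply cond_pos_sum. intros k. apply Rmult_le_pos. apply pow_le; auto.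
    apply Rlt_le, Rinv_0_lt_compat, INR_fact_lt_0. }
  lra.
Qed.
Lemma ex_RInt_gen_pos (f : R -> R) M :
  (forall t, 0 < t -> continuous f t) -> (forall t, 0 < t -> 0 <= f t) ->
  (forall a b, 0 < a -> a <= b -> RInt f a b <= M) ->
  ex_RInt_gen f (at_right 0) (Rbar_locally p_infty).
Proof.
  intros Hc Hp HM.
  assert (Hex : forall a b, 0 < a -> 0 < b -> ex_RInt f a b).
  { intros a b Ha Hb. apply (@ex_RInt_continuous R_CompleteNormedModule). intros z Hz. apply Hc.
    apply Rlt_le_trans with (Rmin a b); [apply Rmin_glb_lt; auto | tauto]. }
  set (E := fun y => exists a b, 0 < a <= b /\ y = RInt f a b).
  assert (HB : bound E).
  { exists M. intros y [a [b [Hab ->]]]. apply HM; lra. }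
  assert (HE : exists y, E y).
  { exists (RInt f 1 1). exists 1, 1. split; [lra | auto]. }
  destruct (completeness E HB HE) as [l Hl].
  exists l. intros P [eps Heps].
  assert (Hub : forall a b, 0 < a <= b -> RInt f a b <= l).
  { intros a b Hab. apply Hl. exists a, b. auto. }
  assert (Hlow : exists a0 b0, 0 < a0 <= b0 /\ l - eps < RInt f a0 b0).
  { apply NNPP. intros Hn.
    assert (l <= l - eps).
    { apply Hl. intros y [a [b [Hab ->]]].
      destruct (Rle_dec (RInt f a b) (l - eps)) as [h|h]; auto.
      exfalso; apply Hn; exists a, b; split; auto; lra. }
    destruct eps; simpl in *; lra. }
  destruct Hlow as [a0 [b0 [Hab0 Hlt]]].
  apply Filter_prod with (Q := fun a => 0 < a < a0) (R := fun b => b0 < b).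
  - assert (Ha0 : 0 < a0) by lra. exists (mkposreal a0 Ha0). intros y Hy Hy0.
    split; auto. unfold ball in Hy; simpl in Hy; unfold AbsRing_ball, abs, minus, plus, opp in Hy; simpl in Hy.
    rewrite Ropp_0, Rplus_0_r in Hy. apply Rabs_def2 in Hy. lra.
  - exists b0. auto.
  - intros a b Ha Hb. simpl. exists (RInt f a b). split.
    + apply (RInt_correct f a b). apply Hex; lra.
    + apply Heps. assert (RInt f a b <= l) by (apply Hub; lra).
      assert (RInt f a0 b0 <= RInt f a b).
      { rewrite <- (RInt_Chasles f a a0 b) by (apply Hex; lra).
        rewrite <- (RInt_Chasles f a0 b0 b) by (apply Hex; lra).
        assert (0 <= RInt f a a0) by (apply RInt_ge_0; [lra | apply Hex; lra | intros; apply Hp; lra]).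
        assert (0 <= RInt f b0 b) by (apply RInt_ge_0; [lra | apply Hex; lra | intros; apply Hp; lra]).
        change plus with Rplus. lra. }
      unfold ball; simpl; unfold AbsRing_ball, abs, minus, plus, opp; simpl.
      apply Rabs_def1; destruct eps; simpl in *; lra.
Qed.
Lemma nat_above x : exists k : nat, x <= INR k.
Proof.
  destruct (archimed x) as [H1 H2].
  destruct (Z.lt_ge_cases (up x) 0) as [h|h].
  - exists 0%nat. simpl. apply IZR_lt in h. lra.
  - exists (Z.to_nat (up x)). rewrite INR_IZR_INZ, Z2Nat.id; lia || lra.
Qed.

Lemma is_derive_Rpower x y : 0 < x -> is_derive (fun t => Rpower t y) x (y * Rpower x (y - 1)).
Proof. intros H. apply is_derive_Reals, derivable_pt_lim_power; auto. Qed.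

Lemma cont_Rpower x y : 0 < x -> continuous (fun t => Rpower t y) x.
Proof. intros H. apply (@ex_derive_continuous R_AbsRing R_NormedModule). eexists. apply is_derive_Rpower; auto. Qed.

Definition gf (z t : R) := Rpower t (z - 1) * exp (- t).

Lemma gf_cont z t : 0 < t -> continuous (gf z) t.
Proof.
  intros H. unfold gf. apply (continuous_mult (fun t => Rpower t (z-1)) (fun t => exp (-t))).
  apply cont_Rpower; auto.
  apply (@ex_derive_continuous R_AbsRing R_NormedModule). auto_derive. auto.
Qed.

Lemma gf_pos z t : 0 < gf z t.
Proof. unfold gf. apply Rmult_lt_0_compat; [unfold Rpower|]; apply exp_pos. Qed.


Lemma Rpower_base1 z : Rpower 1 z = 1.
Proof. unfold Rpower. rewrite ln_1, Rmult_0_r, exp_0. auto. Qed.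

Lemma exp_le1 x : x <= 0 -> exp x <= 1.
Proof. intros H. rewrite <- exp_0. destruct H; [apply Rlt_le, exp_increasing; auto | subst; lra]. Qed.

Lemma ex_RInt_gf z a b : 0 < a -> 0 < b -> ex_RInt (gf z) a b.
Proof.
  intros Ha Hb. apply (@ex_RInt_continuous R_CompleteNormedModule). intros t Ht. apply gf_cont.
  apply Rlt_le_trans with (Rmin a b); [apply Rmin_glb_lt; auto | tauto].
Qed.

Lemma gf_mono z a b a' b' : 0 < a' -> a' <= a -> a <= b -> b <= b' ->
  RInt (gf z) a b <= RInt (gf z) a' b'.
Proof.
  intros H1 H2 H3 H4.
  rewrite <- (RInt_Chasles (gf z) a' a b') by (apply ex_RInt_gf; lra).
  rewrite <- (RInt_Chasles (gf z) a b b') by (apply ex_RInt_gf; lra).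
  assert (0 <= RInt (gf z) a' a) by (apply RInt_ge_0; [lra | apply ex_RInt_gf; lra | intros; apply Rlt_le, gf_pos]).
  assert (0 <= RInt (gf z) b b') by (apply RInt_ge_0; [lra | apply ex_RInt_gf; lra | intros; apply Rlt_le, gf_pos]).
  change plus with Rplus. lra.
Qed.

Lemma gf_bound z : 0 < z -> exists M, forall a b, 0 < a -> a <= b -> RInt (gf z) a b <= M.
Proof.
  intros Hz. destruct (nat_above (z - 1)) as [k Hk].
  set (K := 2 ^ k * INR (fact k)).
  assert (HK : 0 < K) by (apply Rmult_lt_0_compat; [apply pow_lt; lra | apply INR_fact_lt_0]).
  assert (Hpt : forall t, 1 <= t -> gf z t <= K * exp (- t / 2)).
  { intros t Ht. unfold gf.
    assert (H1 : Rpower t (z - 1) <= t ^ k).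
    { rewrite <- Rpower_pow by lra. apply Rle_Rpower; lra. }
    assert (H2 : t ^ k <= K * exp (t / 2)).
    { pose proof (pow_fact_le_exp (t / 2) k ltac:(lra)) as H.
      pose proof (INR_fact_lt_0 k).
      assert (E : (t/2)^k = ((t/2)^k / INR (fact k)) * INR (fact k)) by (field; lra).
      replace t with (2 * (t/2)) at 1 by field. rewrite Rpow_mult_distr. unfold K.
      rewrite E. pose proof (pow_lt 2 k ltac:(lra)).
      apply Rle_trans with (2 ^ k * (exp (t/2) * INR (fact k))).
      apply Rmult_le_compat_l; [lra|]. apply Rmult_le_compat_r; lra. right; ring. }
    assert (E2 : exp (- t / 2) = exp (t / 2) * exp (- t)).
    { rewrite <- exp_plus. f_equal. field. }
    rewrite E2. pose proof (exp_pos (-t)).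
    apply Rle_trans with (t ^ k * exp (- t)). apply Rmult_le_compat_r; lra.
    rewrite <- Rmult_assoc. apply Rmult_le_compat_r; lra. }
  exists (1 / z + 2 * K). intros a b Ha Hab.
  set (a' := Rmin a 1). set (b' := Rmax b 1).
  assert (Ha' : 0 < a' <= 1) by (unfold a'; split; [apply Rmin_glb_lt; lra | apply Rmin_r]).
  assert (Hb' : 1 <= b') by apply Rmax_r.
  eapply Rle_trans. apply (gf_mono z a b a' b'); try lra.
  unfold a'; apply Rmin_l. unfold b'; apply Rmax_l.
  rewrite <- (RInt_Chasles (gf z) a' 1 b') by (apply ex_RInt_gf; lra).
  change plus with Rplus. apply Rplus_le_compat.
  -
    assert (HD : forall x, Rmin a' 1 <= x <= Rmax a' 1 ->
              is_derive (fun t => Rpower t z / z) x (Rpower x (z - 1))).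
    { intros x Hx. assert (0 < x) by (eapply Rlt_le_trans; [|apply Hx]; apply Rmin_glb_lt; lra).
      pose proof (is_derive_Rpower x z H).
      apply (is_derive_scal _ x (/ z)) in H0.
      eapply is_derive_ext; [| replace (Rpower x (z-1)) with (/z * (z * Rpower x (z - 1))) by (field; lra); exact H0].
      intros t; simpl. unfold Rdiv; ring. }
    assert (HC : forall x, Rmin a' 1 <= x <= Rmax a' 1 -> continuous (fun t => Rpower t (z - 1)) x).
    { intros x Hx. apply cont_Rpower. eapply Rlt_le_trans; [|apply Hx]; apply Rmin_glb_lt; lra. }
    assert (HI := is_RInt_derive (fun t => Rpower t z / z) (fun t => Rpower t (z - 1)) a' 1 HD HC).
    eapply Rle_trans. apply RInt_le with (g := fun t => Rpower t (z - 1)); try lra.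
    apply ex_RInt_gf; lra. eexists; exact HI.
    intros x Hx. unfold gf. pose proof (Rpower_pos' x (z - 1)).
    assert (exp (- x) <= 1) by (apply exp_le1; lra).
    rewrite <- (Rmult_1_r (Rpower x (z - 1))) at 2. apply Rmult_le_compat_l; lra.
    rewrite (is_RInt_unique _ _ _ _ HI). rewrite Rpower_base1. unfold minus, plus, opp; simpl.
    pose proof (Rpower_pos' a' z). 
    assert (0 <= Rpower a' z / z) by (apply Rlt_le, Rdiv_lt_0_compat; lra). lra.
  - assert (HD : forall x, Rmin 1 b' <= x <= Rmax 1 b' ->
              is_derive (fun t => - 2 * K * exp (- t / 2)) x (K * exp (- x / 2))).
    { intros x Hx. auto_derive; auto. unfold Rdiv; field. }
    assert (HC : forall x, Rmin 1 b' <= x <= Rmax 1 b' -> continuous (fun t => K * exp (- t / 2)) x).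
    { intros x Hx. apply (@ex_derive_continuous R_AbsRing R_NormedModule). auto_derive; auto. }
    assert (HI := is_RInt_derive _ (fun t => K * exp (- t / 2)) 1 b' HD HC).
    eapply Rle_trans. apply RInt_le with (g := fun t => K * exp (- t / 2)); try lra.
    apply ex_RInt_gf; lra. eexists; exact HI.
    intros x Hx. apply Hpt. lra.
    rewrite (is_RInt_unique _ _ _ _ HI). unfold minus, plus, opp; simpl.
    pose proof (exp_pos (- b' / 2)). 
    assert (exp (- (1) / 2) <= 1) by (apply exp_le1; lra).
    nra.
Qed.


Lemma gf_tail z : exists K, forall t, 1 <= t -> gf z t <= K * exp (- t / 2).
Proof.
  destruct (nat_above (z - 1)) as [k Hk].
  set (K := 2 ^ k * INR (fact k)).
  assert (HK : 0 < K) by (apply Rmult_lt_0_compat; [apply pow_lt; lra | apply INR_fact_lt_0]).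
  exists K. intros t Ht. unfold gf.
    assert (H1 : Rpower t (z - 1) <= t ^ k).
    { rewrite <- Rpower_pow by lra. apply Rle_Rpower; lra. }
    assert (H2 : t ^ k <= K * exp (t / 2)).
    { pose proof (pow_fact_le_exp (t / 2) k ltac:(lra)) as H.
      pose proof (INR_fact_lt_0 k).
      assert (E : (t/2)^k = ((t/2)^k / INR (fact k)) * INR (fact k)) by (field; lra).
      replace t with (2 * (t/2)) at 1 by field. rewrite Rpow_mult_distr. unfold K.
      rewrite E. pose proof (pow_lt 2 k ltac:(lra)).
      apply Rle_trans with (2 ^ k * (exp (t/2) * INR (fact k))).
      apply Rmult_le_compat_l; [lra|]. apply Rmult_le_compat_r; lra. right; ring. }
    assert (E2 : exp (- t / 2) = exp (t / 2) * exp (- t)).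
    { rewrite <- exp_plus. f_equal. field. }
    rewrite E2. pose proof (exp_pos (-t)).
    apply Rle_trans with (t ^ k * exp (- t)). apply Rmult_le_compat_r; lra.
    rewrite <- Rmult_assoc. apply Rmult_le_compat_r; lra.
Qed.

Lemma gf_lim_inf z : filterlim (gf z) (Rbar_locally p_infty) (locally 0).
Proof.
  destruct (gf_tail z) as [K HK].
  change (filterlim (gf z) (Rbar_locally p_infty) (Rbar_locally (Finite 0))).
  apply (filterlim_le_le (fun _ => 0) (gf z) (fun t => K * exp (- t / 2))).
  - exists 1. intros t Ht. split; [apply Rlt_le, gf_pos | apply HK; lra].
  - apply filterlim_const.
  - replace (Finite 0) with (Rbar_mult K 0) by (simpl; f_equal; ring).
    apply (is_lim_scal_l (fun t => exp (- t / 2)) K p_infty 0).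
    eapply is_lim_comp. apply is_lim_exp_m.
    intros P [M HM]. exists (-2 * M). intros x Hx. apply HM. lra.
    exists 0. intros; discriminate.
Qed.

Lemma Gamma_is z : 0 < z -> is_RInt_gen (gf z) (at_right 0) (Rbar_locally p_infty) (Gamma z).
Proof.
  intros Hz. destruct (gf_bound z Hz) as [M HM].
  assert (Hex := ex_RInt_gen_pos (gf z) M (gf_cont z) (fun t _ => Rlt_le _ _ (gf_pos z t)) HM).
  exact (@RInt_gen_correct R_CompleteNormedModule (at_right 0) (Rbar_locally p_infty)
     (Proper_StrongProper _ (at_right_proper_filter 0)) (Proper_StrongProper _ (Rbar_locally_filter p_infty)) (gf z) Hex).
Qed.


Lemma is_derive_eq (f : R -> R) x l l' : is_derive f x l -> l = l' -> is_derive f x l'.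
Proof. intros H <-; auto. Qed.

Lemma Rpower_lim0 z : 0 < z -> filterlim (fun t => Rpower t z) (at_right 0) (locally 0).
Proof.
  intros Hz. unfold Rpower.
  apply (filterlim_comp _ _ _ ln (fun u => exp (z * u)) _ (Rbar_locally m_infty)).
  apply is_lim_ln_0.
  change (is_lim (fun u => exp (z * u)) m_infty 0).
  eapply is_lim_comp. apply is_lim_exp_m.
  intros P [M HM]. exists (M / z). intros x Hx. apply HM.
  apply Rmult_lt_reg_l with (/ z). apply Rinv_0_lt_compat; auto.
  replace (/ z * (z * x)) with x by (field; lra). unfold Rdiv in Hx. lra.
  exists 0. intros; discriminate.
Qed.

Lemma at_right_pos : at_right 0 (fun a => 0 < a).
Proof. exists (mkposreal 1 Rlt_0_1). intros y _ Hy. auto. Qed.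

Lemma pinfty_pos : Rbar_locally p_infty (fun b => 0 < b).
Proof. exists 0. auto. Qed.

Lemma fp_pos : filter_prod (at_right 0) (Rbar_locally p_infty) (fun ab => 0 < fst ab /\ 0 < snd ab).
Proof. apply Filter_prod with (fun a => 0 < a) (fun b => 0 < b); [apply at_right_pos | apply pinfty_pos | simpl; auto]. Qed.

Lemma gf_lim0 z : 1 < z -> filterlim (gf z) (at_right 0) (locally 0).
Proof.
  intros Hz. change (filterlim (gf z) (at_right 0) (Rbar_locally (Finite 0))).
  apply (filterlim_le_le (fun _ => 0) (gf z) (fun t => Rpower t (z - 1))).
  - apply filter_imp with (2 := at_right_pos). intros t Ht. split; [apply Rlt_le, gf_pos|].
    unfold gf. pose proof (Rpower_pos' t (z - 1)).
    assert (exp (- t) <= 1) by (apply exp_le1; lra). nra.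
  - apply filterlim_const.
  - apply Rpower_lim0. lra.
Qed.

Lemma Gamma_rec z : 0 < z -> Gamma (z + 1) = z * Gamma z.
Proof.
  intros Hz.
  set (F := fun t => - gf (z + 1) t).
  assert (HD : forall t, 0 < t -> is_derive F t (gf (z + 1) t - z * gf z t)).
  { intros t Ht. unfold F, gf. replace (z + 1 - 1) with z by ring.
    assert (H1 := is_derive_Rpower t z Ht).
    assert (H2 : is_derive (fun t => exp (- t)) t (- exp (- t))) by (auto_derive; auto; ring).
    assert (H3 := is_derive_mult _ _ t _ _ H1 H2 (fun n m => Rmult_comm n m)).
    apply is_derive_opp in H3.
    eapply is_derive_eq. eapply is_derive_ext; [| exact H3].
    intros u; simpl. unfold opp; simpl. auto.
    unfold opp, plus, mult; simpl. ring. }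
  assert (HDF : forall t, 0 < t -> Derive F t = gf (z + 1) t - z * gf z t).
  { intros t Ht. apply is_derive_unique, HD; auto. }
  assert (HI : is_RInt_gen (Derive F) (at_right 0) (Rbar_locally p_infty) (0 - 0)).
  { apply is_RInt_gen_Derive.
    - apply filter_imp with (2 := fp_pos). intros [a b] [Ha Hb] x Hx; simpl in *.
      eexists; apply HD. eapply Rlt_le_trans; [|apply Hx]. apply Rmin_glb_lt; auto.
    - apply filter_imp with (2 := fp_pos). intros [a b] [Ha Hb] x Hx; simpl in *.
      assert (Hx0 : 0 < x) by (eapply Rlt_le_trans; [|apply Hx]; apply Rmin_glb_lt; auto).
      assert (HC : continuous (fun t => gf (z + 1) t - z * gf z t) x).
      { apply (continuous_minus (fun t => gf (z+1) t) (fun t => z * gf z t)).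
        apply gf_cont; auto.
        apply (continuous_scal_r z (gf z)). apply gf_cont; auto. }
      unfold continuous. rewrite HDF by auto.
      eapply filterlim_ext_loc; [| exact HC].
      exists (mkposreal x Hx0). intros y Hy. simpl in Hy.
      unfold ball in Hy; simpl in Hy; unfold AbsRing_ball, abs, minus, plus, opp in Hy; simpl in Hy.
      apply Rabs_def2 in Hy. rewrite HDF; auto. lra.
    - unfold F. replace 0 with (opp 0) at 2 by (unfold opp; simpl; ring).
      apply (filterlim_comp _ _ _ (gf (z + 1)) opp _ (locally 0)).
      apply gf_lim0; lra. apply (@filterlim_opp R_AbsRing R_NormedModule).
    - unfold F. replace 0 with (opp 0) at 1 by (unfold opp; simpl; ring).
      apply (filterlim_comp _ _ _ (gf (z + 1)) opp _ (locally 0)).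
      apply gf_lim_inf. apply (@filterlim_opp R_AbsRing R_NormedModule). }
  assert (HG := is_RInt_gen_plus _ _ _ _ HI (is_RInt_gen_scal _ z _ (Gamma_is z Hz))).
  apply is_RInt_gen_ext with (g := gf (z + 1)) in HG.
  2:{ apply filter_imp with (2 := fp_pos). intros [a b] [Ha Hb] x Hx; simpl in *.
      assert (Hx0 : 0 < x) by (eapply Rlt_le_trans; [|apply Rlt_le, Hx]; apply Rmin_glb_lt; auto).
      rewrite HDF by auto. unfold plus, scal; simpl; unfold mult; simpl. ring. }
  change (RInt_gen (gf (z+1)) (at_right 0) (Rbar_locally p_infty) = z * Gamma z).
  rewrite (@is_RInt_gen_unique R_CompleteNormedModule (at_right 0) (Rbar_locally p_infty)
     (Proper_StrongProper _ (at_right_proper_filter 0)) (Proper_StrongProper _ (Rbar_locally_filter p_infty)) _ _ HG).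
  unfold plus, scal; simpl; unfold mult; simpl. ring.
Qed.

Lemma gf1 t : gf 1 t = exp (- t).
Proof. unfold gf, Rpower. replace (1 - 1) with 0 by ring. rewrite Rmult_0_l, exp_0. ring. Qed.

Lemma Gamma_1 : Gamma 1 = 1.
Proof.
  set (F := fun t => - exp (- t)).
  assert (HD : forall t, is_derive F t (exp (- t))) by (intros t; unfold F; auto_derive; auto; ring).
  assert (HI : is_RInt_gen (Derive F) (at_right 0) (Rbar_locally p_infty) (0 - (-1))).
  { apply is_RInt_gen_Derive.
    - apply filter_forall. intros ab x _. eexists; apply HD.
    - apply filter_forall. intros ab x _.
      apply (continuous_ext (fun t => exp (- t))). intros t; symmetry; apply is_derive_unique, HD.
      apply (@ex_derive_continuous R_AbsRing R_NormedModule). auto_derive; auto.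
    - apply (filterlim_filter_le_1 (F := locally 0)). apply filter_le_within.
      replace (-1) with (F 0) by (unfold F; rewrite Ropp_0, exp_0; auto).
      apply (@ex_derive_continuous R_AbsRing R_NormedModule). eexists; apply HD.
    - unfold F. replace 0 with (opp 0) at 1 by (unfold opp; simpl; ring).
      apply (filterlim_comp _ _ _ (fun t => exp (- t)) opp _ (locally 0)).
      eapply filterlim_ext. intros t; apply gf1. apply gf_lim_inf.
      apply (@filterlim_opp R_AbsRing R_NormedModule). }
  apply is_RInt_gen_ext with (g := gf 1) in HI.
  2:{ apply filter_forall. intros ab x _. rewrite gf1. apply is_derive_unique, HD. }
  change (RInt_gen (gf 1) (at_right 0) (Rbar_locally p_infty) = 1).
  rewrite (@is_RInt_gen_unique R_CompleteNormedModule (at_right 0) (Rbar_locally p_infty)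
     (Proper_StrongProper _ (at_right_proper_filter 0)) (Proper_StrongProper _ (Rbar_locally_filter p_infty)) _ _ HI).
  change (Rminus 0 (-1) = 1); ring.
Qed.


Lemma gen_le (f g : R -> R) lf lg : (forall t, 0 < t -> 0 <= f t <= g t) ->
  is_RInt_gen f (at_right 0) (Rbar_locally p_infty) lf ->
  is_RInt_gen g (at_right 0) (Rbar_locally p_infty) lg -> lf <= lg.
Proof.
  intros H Hf Hg.
  eapply Rle_trans; [apply Rle_abs|].
  apply (@RInt_gen_norm R_CompleteNormedModule (at_right 0) (Rbar_locally p_infty)
     (at_right_proper_filter 0) (Rbar_locally_filter p_infty) f g lf lg); auto.
  - apply Filter_prod with (fun a => 0 < a < 1) (fun b => 1 < b).
    + exists (mkposreal 1 Rlt_0_1). intros y Hy Hy0. split; auto.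
      unfold ball in Hy; simpl in Hy; unfold AbsRing_ball, abs, minus, plus, opp in Hy; simpl in Hy.
      rewrite Ropp_0, Rplus_0_r in Hy. apply Rabs_def2 in Hy. lra.
    + exists 1; auto.
    + simpl; intros; lra.
  - apply filter_imp with (2 := fp_pos). intros [a b] [Ha Hb] x Hx; simpl in *.
    destruct (H x) as [H1 H2]; [lra|]. unfold norm; simpl; unfold abs; simpl.
    rewrite Rabs_pos_eq; auto.
Qed.

Lemma Rpower_m1 y r : 0 < y -> Rpower y (r - 1) * y = Rpower y r.
Proof. intros Hy. unfold Rminus. rewrite Rpower_plus, Rpower_Ropp, Rpower_1 by auto. field. lra. Qed.

Lemma Gamma_upper y r : 0 < y -> 0 <= r <= 1 -> Gamma (y + r) <= Rpower y r * Gamma y.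
Proof.
  intros Hy Hr.
  assert (Hle : Gamma (y + r) <= plus (scal ((1 - r) * Rpower y r) (Gamma y)) (scal (r * Rpower y (r - 1)) (Gamma (y + 1)))).
  { apply (gen_le (gf (y + r)) (fun t => plus (scal ((1 - r) * Rpower y r) (gf y t)) (scal (r * Rpower y (r - 1)) (gf (y + 1) t)))).
    - intros t Ht. split. apply Rlt_le, gf_pos.
      change (gf (y + r) t <= (1 - r) * Rpower y r * gf y t + r * Rpower y (r - 1) * gf (y + 1) t). unfold gf.
      replace (y + r - 1) with ((y - 1) + r) by ring. replace (y + 1 - 1) with ((y - 1) + 1) by ring.
      rewrite (Rpower_plus (y - 1) r t), (Rpower_plus (y - 1) 1 t), Rpower_1 by auto.
      pose proof (Rpower_tangent t y r Ht Hy Hr).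
      pose proof (Rpower_pos' t (y - 1)). pose proof (exp_pos (- t)).
      assert (0 < Rpower t (y - 1) * exp (- t)) by (apply Rmult_lt_0_compat; auto).
      set (A := Rpower t (y - 1) * exp (- t)) in *.
      apply Rle_trans with (A * Rpower t r).
      right; unfold A; ring. apply Rle_trans with (A * ((1 - r) * Rpower y r + r * Rpower y (r - 1) * t)).
      apply Rmult_le_compat_l; lra. right; unfold A; ring.
    - apply Gamma_is; lra.
    - exact (is_RInt_gen_plus _ _ _ _ (is_RInt_gen_scal _ ((1 - r) * Rpower y r) _ (Gamma_is y Hy))
                 (is_RInt_gen_scal _ (r * Rpower y (r - 1)) _ (Gamma_is (y + 1) (Rplus_lt_0_compat _ _ Hy Rlt_0_1)))). }
  change (Gamma (y + r) <= (1 - r) * Rpower y r * Gamma y + r * Rpower y (r - 1) * Gamma (y + 1)) in Hle.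
  rewrite Gamma_rec in Hle by auto.
  assert (E : (1 - r) * Rpower y r * Gamma y + r * Rpower y (r - 1) * (y * Gamma y) = Rpower y r * Gamma y).
  { rewrite <- (Rpower_m1 y r Hy). ring. }
  lra.
Qed.

Lemma Gamma_lower y r : 0 < y -> 0 <= r <= 1 -> Gamma (y + 1) <= Rpower (y + r) (1 - r) * Gamma (y + r).
Proof.
  intros Hy Hr. set (c := y + r). assert (Hc : 0 < c) by (unfold c; lra).
  assert (Hle : Gamma (y + 1) <= plus (scal (r * Rpower c (1 - r)) (Gamma c)) (scal ((1 - r) * Rpower c (1 - r - 1)) (Gamma (c + 1)))).
  { apply (gen_le (gf (y + 1)) (fun t => plus (scal (r * Rpower c (1 - r)) (gf c t)) (scal ((1 - r) * Rpower c (1 - r - 1)) (gf (c + 1) t)))).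
    - intros t Ht. split. apply Rlt_le, gf_pos.
      change (gf (y + 1) t <= r * Rpower c (1 - r) * gf c t + (1 - r) * Rpower c (1 - r - 1) * gf (c + 1) t). unfold gf.
      replace (y + 1 - 1) with ((c - 1) + (1 - r)) by (unfold c; ring). replace (c + 1 - 1) with ((c - 1) + 1) by ring.
      rewrite (Rpower_plus (c - 1) (1 - r) t), (Rpower_plus (c - 1) 1 t), Rpower_1 by auto.
      pose proof (Rpower_tangent t c (1 - r) Ht Hc ltac:(lra)).
      replace (1 - (1 - r)) with r in H by ring.
      pose proof (Rpower_pos' t (c - 1)). pose proof (exp_pos (- t)).
      assert (0 < Rpower t (c - 1) * exp (- t)) by (apply Rmult_lt_0_compat; auto).
      set (A := Rpower t (c - 1) * exp (- t)) in *.
      apply Rle_trans with (A * Rpower t (1 - r)). right; unfold A; ring.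
      apply Rle_trans with (A * (r * Rpower c (1 - r) + (1 - r) * Rpower c (1 - r - 1) * t)).
      apply Rmult_le_compat_l; lra. right; unfold A; ring.
    - apply Gamma_is; lra.
    - exact (is_RInt_gen_plus _ _ _ _ (is_RInt_gen_scal _ (r * Rpower c (1 - r)) _ (Gamma_is c Hc))
                 (is_RInt_gen_scal _ ((1 - r) * Rpower c (1 - r - 1)) _ (Gamma_is (c + 1) (Rplus_lt_0_compat _ _ Hc Rlt_0_1)))). }
  change (Gamma (y + 1) <= r * Rpower c (1 - r) * Gamma c + (1 - r) * Rpower c (1 - r - 1) * Gamma (c + 1)) in Hle.
  rewrite (Gamma_rec c Hc) in Hle.
  assert (E : r * Rpower c (1 - r) * Gamma c + (1 - r) * Rpower c (1 - r - 1) * (c * Gamma c) = Rpower c (1 - r) * Gamma c).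
  { rewrite <- (Rpower_m1 c (1 - r) Hc). ring. }
  fold c. lra.
Qed.


Lemma pos_induction (P : R -> Prop) :
  (forall r, 0 < r <= 1 -> P r) -> (forall z, 0 < z -> P z -> P (z + 1)) ->
  forall z, 0 < z -> P z.
Proof.
  intros H0 HS z Hz. destruct (nat_above z) as [k Hk].
  revert z Hz Hk. induction k; intros z Hz Hk.
  - simpl in Hk. lra.
  - destruct (Rle_dec z 1) as [h|h]. apply H0; lra.
    replace z with ((z - 1) + 1) by ring. apply HS. lra. apply IHk. lra.
    rewrite S_INR in Hk. lra.
Qed.

Lemma Gamma_2 : Gamma 2 = 1.
Proof. replace 2 with (1 + 1) by ring. rewrite Gamma_rec, Gamma_1 by lra. ring. Qed.

Lemma Gamma_pos z : 0 < z -> 0 < Gamma z.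
Proof.
  revert z. apply (pos_induction (fun z => 0 < Gamma z)).
  - intros r Hr. pose proof (Gamma_lower 1 r ltac:(lra) ltac:(lra)) as H.
    replace (1 + 1) with 2 in H by ring. rewrite Gamma_2 in H.
    pose proof (Rpower_pos' (1 + r) (1 - r)).
    assert (H1 : 0 < Gamma (1 + r)) by nra.
    replace (1 + r) with (r + 1) in H1 by ring. rewrite Gamma_rec in H1 by lra. nra.
  - intros z Hz H. rewrite Gamma_rec by auto. nra.
Qed.

Lemma Gamma_nat n : Gamma (INR n + 1) = INR (fact n).
Proof.
  induction n. simpl. replace (0 + 1) with 1 by ring. apply Gamma_1.
  rewrite S_INR, Gamma_rec, IHn by (pose proof (pos_INR n); lra).
  rewrite fact_simpl, mult_INR, S_INR. ring.
Qed.

Lemma poch_pos a n : 0 < a -> 0 < poch a n.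
Proof. intros Ha. induction n; simpl. lra. pose proof (pos_INR n). nra. Qed.

Lemma Gamma_poch a n : 0 < a -> Gamma (a + INR n) = poch a n * Gamma a.
Proof.
  intros Ha. induction n. simpl. rewrite Rplus_0_r. ring.
  rewrite S_INR. replace (a + (INR n + 1)) with ((a + INR n) + 1) by ring.
  rewrite Gamma_rec, IHn by (pose proof (pos_INR n); lra). simpl. ring.
Qed.

Lemma poch_shift a n : poch a (S n) = a * poch (a + 1) n.
Proof.
  induction n. simpl. ring.
  change (poch a (S (S n))) with (poch a (S n) * (a + INR (S n))).
  rewrite IHn. cbn [poch]. rewrite S_INR. ring.
Qed.

Definition Bf (a : R) (n : nat) := Rpower (INR n) (1 - a) * poch a n / INR (fact n).


Lemma lim_invS : is_lim_seq (fun n => / INR (S n)) 0.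
Proof.
  apply (is_lim_seq_incr_1 (fun n => / INR n)).
  replace (Finite 0) with (Rbar_inv p_infty) by auto.
  apply is_lim_seq_inv. apply is_lim_seq_INR. discriminate.
Qed.

Lemma lim_inv_shift d : 0 <= d -> is_lim_seq (fun n => / (INR (S n) + d)) 0.
Proof.
  intros Hd. apply is_lim_seq_le_le with (fun _ => 0) (fun n => / INR (S n)).
  - intros n. pose proof (lt_0_INR (S n) ltac:(lia)). split.
    apply Rlt_le, Rinv_0_lt_compat; lra.
    apply Rinv_le_contravar; lra.
  - apply is_lim_seq_const.
  - apply lim_invS.
Qed.

Lemma lim_ratio r : 0 <= r -> is_lim_seq (fun n => INR (S n) / (INR (S n) + r)) 1.
Proof.
  intros Hr.
  apply is_lim_seq_ext with (fun n => 1 - r * / (INR (S n) + r)).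
  { intros n. pose proof (lt_0_INR (S n) ltac:(lia)). field. lra. }
  assert (H : is_lim_seq (fun n => 1 - r * / (INR (S n) + r)) (1 - r * 0)).
  { apply is_lim_seq_minus'. apply is_lim_seq_const.
    apply is_lim_seq_mult'. apply is_lim_seq_const. apply lim_inv_shift; auto. }
  replace (1 - r * 0) with 1 in H by ring. exact H.
Qed.

Lemma lim_cont_comp (f : R -> R) u l : continuous f l -> is_lim_seq u l -> is_lim_seq (fun n => f (u n)) (f l).
Proof.
  intros Hc Hu. unfold is_lim_seq. eapply filterlim_comp. exact Hu. exact Hc.
Qed.

Lemma Rpower_div x y c : 0 < x -> 0 < y -> Rpower (x / y) c = Rpower x c / Rpower y c.
Proof.
  intros Hx Hy. unfold Rpower, Rdiv. rewrite ln_mult, ln_Rinv; auto.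
  rewrite Rmult_plus_distr_l, exp_plus. rewrite <- exp_Ropp. f_equal. f_equal. ring.
  apply Rinv_0_lt_compat; auto.
Qed.

Lemma Bf_base r : 0 < r <= 1 -> is_lim_seq (Bf r) (/ Gamma r).
Proof.
  intros Hr. pose proof (Gamma_pos r ltac:(lra)) as HG.
  apply is_lim_seq_incr_1.
  apply is_lim_seq_ext with (fun n => / Gamma r * (Gamma r * Bf r (S n))).
  { intros n; field; lra. }
  replace (Finite (/ Gamma r)) with (Rbar_mult (/ Gamma r) 1) by (simpl; f_equal; ring).
  apply is_lim_seq_scal_l.
  apply is_lim_seq_le_le with (fun n => Rpower (INR (S n) / (INR (S n) + r)) (1 - r)) (fun _ => 1).
  - intros n. set (y := INR (S n)). assert (Hy : 0 < y) by (apply lt_0_INR; lia).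
    assert (E : Gamma r * Bf r (S n) = Rpower y (1 - r) * Gamma (y + r) / INR (fact (S n))).
    { unfold Bf. fold y. replace (y + r) with (r + INR (S n)) by (unfold y; ring).
      rewrite Gamma_poch by lra. field. apply INR_fact_neq_0. }
    assert (Hf1 : INR (fact (S n)) = y * Gamma y).
    { unfold y. rewrite S_INR at 2. rewrite Gamma_nat, fact_simpl, mult_INR. auto. }
    assert (Hf2 : INR (fact (S n)) = Gamma (y + 1)).
    { unfold y. rewrite Gamma_nat. auto. }
    pose proof (Gamma_upper y r Hy ltac:(lra)) as HU.
    pose proof (Gamma_lower y r Hy ltac:(lra)) as HL.
    pose proof (Gamma_pos y Hy). pose proof (Gamma_pos (y + r) ltac:(lra)).
    pose proof (Rpower_pos' y (1 - r)). pose proof (Rpower_pos' (y + r) (1 - r)).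
    pose proof (INR_fact_lt_0 (S n)).
    rewrite E. split.
    + rewrite Rpower_div by lra. rewrite <- Hf2 in HL.
      apply Rle_trans with (Rpower y (1 - r) * (INR (fact (S n)) / Rpower (y + r) (1 - r)) / INR (fact (S n))).
      right. field. split; lra.
      unfold Rdiv. apply Rmult_le_compat_r. apply Rlt_le, Rinv_0_lt_compat; lra.
      apply Rmult_le_compat_l. lra.
      apply Rle_trans with (Rpower (y + r) (1 - r) * Gamma (y + r) * / Rpower (y + r) (1 - r)).
      apply Rmult_le_compat_r. apply Rlt_le, Rinv_0_lt_compat; lra. auto.
      right; field; lra.
    + assert (Rpower y (1 - r) * Rpower y r = y).
      { rewrite <- Rpower_plus. replace (1 - r + r) with 1 by ring. apply Rpower_1; auto. }
      apply Rle_trans with (Rpower y (1 - r) * (Rpower y r * Gamma y) / INR (fact (S n))).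
      unfold Rdiv. apply Rmult_le_compat_r. apply Rlt_le, Rinv_0_lt_compat; lra.
      apply Rmult_le_compat_l; lra.
      rewrite Hf1. right. rewrite <- Rmult_assoc, H4. field. split; lra.
  - assert (H : is_lim_seq (fun n => Rpower (INR (S n) / (INR (S n) + r)) (1 - r)) (Rpower 1 (1 - r))).
    { apply (lim_cont_comp (fun u => Rpower u (1 - r))). apply cont_Rpower; lra.
      apply lim_ratio; lra. }
    rewrite Rpower_base1 in H. exact H.
  - apply is_lim_seq_const.
Qed.

Lemma Bf_step a : 0 < a -> is_lim_seq (Bf a) (/ Gamma a) -> is_lim_seq (Bf (a + 1)) (/ Gamma (a + 1)).
Proof.
  intros Ha Hl. pose proof (Gamma_pos a Ha).
  apply is_lim_seq_incr_1. apply is_lim_seq_incr_1 in Hl.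
  apply is_lim_seq_ext with (fun n => Bf a (S n) * (/ INR (S n) + / a)).
  { intros n. set (y := INR (S n)). assert (Hy : 0 < y) by (apply lt_0_INR; lia).
    unfold Bf. fold y.
    assert (Ep : poch (a + 1) (S n) = poch a (S n) * (a + y) / a).
    { apply Rmult_eq_reg_l with a; [| lra]. rewrite <- poch_shift. change (poch a (S (S n))) with (poch a (S n) * (a + INR (S n))). fold y.
      field. lra. }
    assert (Er : Rpower y (1 - (a + 1)) = Rpower y (1 - a) / y).
    { rewrite <- (Rpower_m1 y (1 - a) Hy). replace (1 - a - 1) with (1 - (a + 1)) by ring. field. lra. }
    rewrite Ep, Er. pose proof (INR_fact_lt_0 (S n)). field. repeat split; lra. }
  rewrite Gamma_rec by auto. replace (/ (a * Gamma a)) with (/ Gamma a * (0 + / a)) by (field; lra).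
  apply is_lim_seq_mult'. auto. apply is_lim_seq_plus'. apply lim_invS. apply is_lim_seq_const.
Qed.

Lemma Bf_lim a : 0 < a -> is_lim_seq (Bf a) (/ Gamma a).
Proof.
  revert a. apply (pos_induction (fun a => is_lim_seq (Bf a) (/ Gamma a))).
  apply Bf_base. apply Bf_step.
Qed.


Lemma Bf_nonneg a n : 0 < a -> 0 <= Bf a n.
Proof.
  intros Ha. unfold Bf. pose proof (poch_pos a n Ha). pose proof (Rpower_pos' (INR n) (1 - a)).
  pose proof (INR_fact_lt_0 n). apply Rlt_le. apply Rdiv_lt_0_compat; auto. apply Rmult_lt_0_compat; auto.
Qed.

Lemma Bf_decr a n : 1 <= a -> (1 <= n)%nat -> Bf a (S n) <= Bf a n.
Proof.
  intros Ha Hn. set (x := INR n). assert (Hx : 1 <= x) by (apply (le_INR 1); auto).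
  set (Q := Rpower ((x + 1) / x) (a - 1)).
  assert (HQ : (a + x) / (x + 1) <= Q).
  { unfold Q, Rpower. eapply Rle_trans; [| apply exp_ineq1_le].
    pose proof (ln_lower ((x + 1) / x) ltac:(apply Rdiv_lt_0_compat; lra)).
    replace (/ ((x + 1) / x)) with (x / (x + 1)) in H by (field; lra).
    apply Rle_trans with (1 + (a - 1) * (1 - x / (x + 1))).
    right; field; lra. apply Rplus_le_compat_l, Rmult_le_compat_l; lra. }
  assert (HQp : 0 < Q) by apply Rpower_pos'.
  assert (E : Rpower (x + 1) (1 - a) = Rpower x (1 - a) / Q).
  { unfold Q. replace (1 - a) with (- (a - 1)) by ring. rewrite !Rpower_Ropp.
    rewrite Rpower_div by lra. field. split; apply Rgt_not_eq, Rpower_pos'. }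
  unfold Bf. rewrite S_INR. fold x. rewrite E. change (poch a (S n)) with (poch a n * (a + INR n)). fold x.
  rewrite fact_simpl, mult_INR, S_INR. fold x.
  pose proof (poch_pos a n ltac:(lra)). pose proof (Rpower_pos' x (1 - a)). pose proof (INR_fact_lt_0 n).
  set (P := poch a n) in *. set (R0 := Rpower x (1 - a)) in *. set (F := INR (fact n)) in *.
  apply Rle_trans with (R0 * P / F * ((a + x) / (x + 1) / Q)).
  right; field; repeat split; lra.
  rewrite <- (Rmult_1_r (R0 * P / F)) at 2. apply Rmult_le_compat_l.
  apply Rlt_le, Rdiv_lt_0_compat; auto; apply Rmult_lt_0_compat; auto.
  apply Rle_trans with (Q / Q). unfold Rdiv; apply Rmult_le_compat_r. apply Rlt_le, Rinv_0_lt_compat; auto. auto.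
  right; field; lra.
Qed.

Lemma poch_le_2a a N k : 0 < a -> INR N <= a -> (k <= N)%nat -> poch a k <= (2 * a) ^ k.
Proof.
  intros Ha0 Ha. induction k; intros Hk. simpl; lra.
  simpl. assert (INR k <= INR N) by (apply le_INR; lia).
  pose proof (pos_INR k). pose proof (pos_INR N).
  pose proof (poch_pos a k Ha0).
  rewrite (Rmult_comm (2 * a)). apply Rmult_le_compat; try lra. apply IHk; lia.
Qed.

Lemma Bf_atN a N : (1 <= N)%nat -> INR N <= a -> Bf a N <= Rpower (INR N) (1 - a) * exp (2 * a).
Proof.
  intros HN Ha. assert (Ha0 : 0 < a) by (pose proof (le_INR 1 N HN); simpl in *; lra).
  unfold Bf. pose proof (poch_le_2a a N N Ha0 Ha (le_n N)).
  pose proof (pow_fact_le_exp (2 * a) N ltac:(lra)).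
  pose proof (Rpower_pos' (INR N) (1 - a)). pose proof (INR_fact_lt_0 N).
  unfold Rdiv. rewrite Rmult_assoc. apply Rmult_le_compat_l; [lra|].
  apply Rle_trans with ((2 * a) ^ N * / INR (fact N)); [|exact H0].
  apply Rmult_le_compat_r; [apply Rlt_le, Rinv_0_lt_compat|]; lra.
Qed.

Lemma Bf_tail a N n : (1 <= N)%nat -> INR N <= a -> (N <= n)%nat ->
  Bf a n <= Rpower (INR N) (1 - a) * exp (2 * a).
Proof.
  intros HN Ha Hn. assert (Ha1 : 1 <= a) by (pose proof (le_INR 1 N HN); simpl in *; lra).
  induction Hn. apply Bf_atN; auto.
  eapply Rle_trans; [apply Bf_decr|]; auto. lia.
Qed.

Lemma invGamma_bound a N : (1 <= N)%nat -> INR N <= a -> / Gamma a <= Rpower (INR N) (1 - a) * exp (2 * a).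
Proof.
  intros HN Ha. assert (Ha0 : 0 < a) by (pose proof (le_INR 1 N HN); simpl in *; lra).
  assert (H := is_lim_seq_le_loc (Bf a) (fun _ => Rpower (INR N) (1 - a) * exp (2 * a)) (/ Gamma a) (Rpower (INR N) (1 - a) * exp (2 * a))).
  simpl in H. apply H.
  exists N. intros n Hn. apply Bf_tail; auto.
  apply Bf_lim; auto. apply is_lim_seq_const.
Qed.


Lemma ser_tail_bound (a M : nat -> R) K :
  (forall k, Rabs (a (K + k)%nat) <= M (K + k)%nat) -> ex_series (fun k => M (K + k)%nat) ->
  Rabs (Series (fun k => a (K + k)%nat)) <= Series (fun k => M (K + k)%nat).
Proof.
  intros H HM.
  assert (HA : ex_series (fun k => Rabs (a (K + k)%nat))).
  { apply (ex_series_le (V := R_CompleteNormedModule)) with (fun k => M (K + k)%nat); auto.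
    intros k. unfold norm; simpl; unfold abs; simpl. rewrite Rabs_Rabsolu. auto. }
  eapply Rle_trans. apply Series_Rabs; auto.
  apply Series_le; auto. intros k; split; [apply Rabs_pos | auto].
Qed.

Lemma ex_series_tail_dom (a M : nat -> R) S0 :
  (forall s, (S0 <= s)%nat -> Rabs (a s) <= M s) -> ex_series M -> ex_series a.
Proof.
  intros H HM. apply (ex_series_incr_n a S0).
  apply (ex_series_le (V := R_CompleteNormedModule)) with (fun k => M (S0 + k)%nat).
  intros k. unfold norm; simpl; unfold abs; simpl. apply H; lia.
  apply (ex_series_incr_n M S0); auto.
Qed.

Lemma partial_lim (T : nat -> nat -> R) (t : nat -> R) K :
  (forall s, is_lim_seq (fun n => T s n) (t s)) ->
  is_lim_seq (fun n => sum_f_R0 (fun s => T s n) K) (sum_f_R0 t K).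
Proof.
  intros H. induction K; simpl. apply H.
  apply is_lim_seq_plus'; auto.
Qed.

Lemma tail_small (M : nat -> R) : ex_series M -> forall eps, 0 < eps ->
  exists K0, forall K, (K0 <= K)%nat -> Rabs (Series (fun k => M (S K + k)%nat)) < eps.
Proof.
  intros HM eps He. destruct HM as [l Hl].
  assert (Hs : Series M = l) by (apply is_series_unique; auto).
  apply is_series_Reals in Hl. destruct (Hl eps He) as [K0 HK0].
  exists K0. intros K HK.
  rewrite (Series_incr_n M (S K)) in Hs by (lia || (exists l; apply is_series_Reals; auto)).
  simpl pred in Hs. specialize (HK0 K HK). unfold R_dist in HK0.
  replace (Series (fun k => M (S K + k)%nat)) with (l - sum_f_R0 M K) by lra.
  rewrite Rabs_minus_sym. auto.
Qed.

Lemma tannery (T : nat -> nat -> R) (t M : nat -> R) (S0 N0 : nat) :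
  (forall s, is_lim_seq (fun n => T s n) (t s)) ->
  (forall s n, (S0 <= s)%nat -> (N0 <= n)%nat -> Rabs (T s n) <= M s) ->
  ex_series M ->
  ex_series t /\ (forall n, (N0 <= n)%nat -> ex_series (fun s => T s n)) /\
  is_lim_seq (fun n => Series (fun s => T s n)) (Series t).
Proof.
  intros Hlim Hdom HM.
  assert (Ht : forall s, (S0 <= s)%nat -> Rabs (t s) <= M s).
  { intros s Hs. assert (H := is_lim_seq_le_loc (fun n => Rabs (T s n)) (fun _ => M s) (Rabs (t s)) (M s)).
    simpl in H. apply H. exists N0. intros n Hn. apply Hdom; auto.
    apply (is_lim_seq_abs _ (t s)). apply Hlim. apply is_lim_seq_const. }
  assert (Hext : ex_series t) by (apply ex_series_tail_dom with M S0; auto).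
  assert (HexT : forall n, (N0 <= n)%nat -> ex_series (fun s => T s n)).
  { intros n Hn. apply ex_series_tail_dom with M S0; auto. }
  split; auto. split; auto.
  apply is_lim_seq_Reals. intros eps Heps.
  destruct (tail_small M HM (eps / 4) ltac:(lra)) as [K0 HK0].
  set (K := max K0 S0).
  assert (HP := partial_lim T t K Hlim). apply is_lim_seq_Reals in HP.
  destruct (HP (eps / 2) ltac:(lra)) as [N1 HN1].
  exists (max N0 N1). intros n Hn. unfold R_dist.
  rewrite (Series_incr_n (fun s => T s n) (S K)) by (lia || (apply HexT; lia)).
  rewrite (Series_incr_n t (S K)) by (lia || auto). simpl pred.
  assert (HnN1 : (n >= N1)%nat) by lia. specialize (HN1 n HnN1). unfold R_dist in HN1.
  assert (HMt : ex_series (fun k => M (S K + k)%nat)) by (apply (ex_series_incr_n M (S K)); auto).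
  assert (HKS : (S0 <= K)%nat) by (unfold K; lia). assert (HKK : (K0 <= K)%nat) by (unfold K; lia).
  assert (H1 := ser_tail_bound (fun s => T s n) M (S K) (fun k => Hdom (S K + k)%nat n ltac:(lia) ltac:(lia)) HMt).
  assert (H2 := ser_tail_bound t M (S K) (fun k => Ht (S K + k)%nat ltac:(lia)) HMt).
  specialize (HK0 K HKK). pose proof (Rle_abs (Series (fun k => M (S K + k)%nat))).
  set (A := sum_f_R0 (fun s => T s n) K) in *. set (B := sum_f_R0 t K) in *.
  set (X := Series (fun k => T (S K + k)%nat n)) in *. set (Y := Series (fun k => t (S K + k)%nat)) in *.
  set (Z := Series (fun k => M (S K + k)%nat)) in *.
  replace (A + X - (B + Y)) with ((A - B) + (X - Y)) by ring.
  eapply Rle_lt_trans. apply Rabs_triang.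
  eapply Rle_lt_trans with (Rabs (A - B) + (Rabs X + Rabs Y)).
  apply Rplus_le_compat_l. unfold Rminus. eapply Rle_trans. apply Rabs_triang. rewrite Rabs_Ropp. lra.
  lra.
Qed.


Definition cm (m : nat) (s : nat) := poch (INR m) s / INR (fact s).

Lemma poch_nonneg c n : 0 <= c -> 0 <= poch c n.
Proof. intros Hc. induction n; simpl. lra. pose proof (pos_INR n). nra. Qed.

Lemma cm_bound m s : 0 <= cm m s <= (INR m + 1) ^ s.
Proof.
  unfold cm. pose proof (pos_INR m). induction s.
  - simpl. lra.
  - rewrite fact_simpl, mult_INR. change (poch (INR m) (S s)) with (poch (INR m) s * (INR m + INR s)).
    pose proof (pos_INR s). pose proof (INR_fact_lt_0 s). pose proof (poch_nonneg (INR m) s H).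
    replace (poch (INR m) s * (INR m + INR s) / (INR (S s) * INR (fact s)))
      with (poch (INR m) s / INR (fact s) * ((INR m + INR s) / INR (S s))) by (rewrite S_INR; field; lra).
    rewrite S_INR. split.
    + apply Rmult_le_pos. lra. apply Rdiv_le_0_compat; lra.
    + simpl. rewrite Rmult_comm. apply Rmult_le_compat. apply Rdiv_le_0_compat; lra. lra.
      apply Rmult_le_reg_r with (INR s + 1). lra. unfold Rdiv. rewrite Rmult_assoc, Rinv_l by lra. nra.
      lra.
Qed.

Lemma exp_mult_nat c s : exp (c * INR s) = exp c ^ s.
Proof.
  induction s. simpl. rewrite Rmult_0_r, exp_0. auto.
  rewrite S_INR, Rmult_plus_distr_l, Rmult_1_r, exp_plus, IHs. simpl. ring.
Qed.

Lemma Rpower_mult_nat x c s : 0 < x -> Rpower x (c * INR s) = Rpower x c ^ s.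
Proof. intros Hx. rewrite <- Rpower_mult. apply Rpower_pow. apply Rpower_pos'. Qed.

Lemma choose_N (alpha C : R) : 0 < alpha -> 0 < C ->
  exists N : nat, (1 <= N)%nat /\ C / Rpower (INR N) alpha <= 1 / 2.
Proof.
  intros Ha HC. set (K := Rpower (2 * C) (/ alpha)).
  destruct (nat_above (Rmax K 1)) as [N HN].
  assert (HK : 0 < K) by apply Rpower_pos'.
  assert (HN1 : 1 <= INR N) by (eapply Rle_trans; [apply Rmax_r | exact HN]).
  assert (HNK : K <= INR N) by (eapply Rle_trans; [apply Rmax_l | exact HN]).
  exists N. split. apply INR_le. simpl. lra.
  assert (Rpower K alpha = 2 * C).
  { unfold K. rewrite Rpower_mult. replace (/ alpha * alpha) with 1 by (field; lra). apply Rpower_1. lra. }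
  assert (2 * C <= Rpower (INR N) alpha).
  { rewrite <- H. apply Rle_Rpower_l; lra. }
  apply Rmult_le_reg_r with (Rpower (INR N) alpha). apply Rpower_pos'.
  unfold Rdiv. rewrite Rmult_assoc, Rinv_l. lra. apply Rgt_not_eq, Rpower_pos'.
Qed.

Lemma key_bound (alpha x C0 : R) (m N s : nat) : 0 < alpha -> 0 < x -> 0 <= C0 -> (1 <= N)%nat ->
  cm m s * C0 ^ s * Rpower x (alpha * INR s - 1) * (Rpower (INR N) (1 - alpha * INR s) * exp (2 * (alpha * INR s)))
  <= (INR N / x) * ((INR m + 1) * C0 * Rpower x alpha * exp (2 * alpha) / Rpower (INR N) alpha) ^ s.
Proof.
  intros Ha Hx HC HN. assert (HN0 : 0 < INR N) by (apply lt_0_INR; lia).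
  set (Rx := Rpower x alpha). set (RN := Rpower (INR N) alpha). set (E := exp (2 * alpha)).
  assert (HRx : 0 < Rx) by apply Rpower_pos'. assert (HRN : 0 < RN) by apply Rpower_pos'.
  assert (HE : 0 < E) by apply exp_pos.
  assert (E1 : Rpower x (alpha * INR s - 1) = Rx ^ s / x).
  { apply Rmult_eq_reg_r with x; [| lra]. rewrite Rpower_m1 by auto. rewrite Rpower_mult_nat by auto. fold Rx. field. lra. }
  assert (E2 : Rpower (INR N) (1 - alpha * INR s) = INR N / RN ^ s).
  { unfold Rminus. rewrite Rpower_plus, Rpower_Ropp, Rpower_1, Rpower_mult_nat by auto. fold RN. auto. }
  assert (E3 : exp (2 * (alpha * INR s)) = E ^ s).
  { unfold E. rewrite <- exp_mult_nat. f_equal. ring. }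
  rewrite E1, E2, E3.
  pose proof (cm_bound m s) as [Hc1 Hc2].
  assert (HRNs : 0 < RN ^ s) by (apply pow_lt; auto).
  replace ((INR m + 1) * C0 * Rx * E / RN) with ((INR m + 1) * (C0 * Rx * E / RN)) by (field; lra).
  rewrite Rpow_mult_distr.
  replace (cm m s * C0 ^ s * (Rx ^ s / x) * (INR N / RN ^ s * E ^ s))
    with (INR N / x * (cm m s * (C0 * Rx * E / RN) ^ s)).
  2:{ unfold Rdiv. rewrite !Rpow_mult_distr, pow_inv. field. split; lra. }
  apply Rmult_le_compat_l. apply Rlt_le, Rdiv_lt_0_compat; lra.
  apply Rmult_le_compat_r; auto. apply pow_le. apply Rdiv_le_0_compat; [|lra].
  apply Rmult_le_pos; [apply Rmult_le_pos|]; lra.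
Qed.


Definition TT (alpha lambda0 : R) (m : nat) (x : R) (s n : nat) :=
  cm m s * (- lambda0) ^ s * Rpower x (alpha * INR s - 1) * Bf (alpha * INR s) n.

Definition tt (alpha lambda0 : R) (m : nat) (x : R) (s : nat) :=
  match s with
  | O => 0
  | S _ => poch (INR m) s * (- lambda0) ^ s * Rpower x (alpha * INR s - 1)
           / (INR (Factorial.fact s) * Gamma (alpha * INR s))
  end.

Lemma poch0 n : poch 0 (S n) = 0.
Proof. induction n. simpl. ring. change (poch 0 (S (S n))) with (poch 0 (S n) * (0 + INR (S n))). rewrite IHn. ring. Qed.

Lemma TT_lim alpha lambda0 m x s : 0 < alpha -> 0 < x ->
  is_lim_seq (fun n => TT alpha lambda0 m x s n) (tt alpha lambda0 m x s).
Proof.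
  intros Ha Hx. destruct s as [|s].
  - apply is_lim_seq_ext_loc with (fun _ => 0). exists 1%nat. intros n Hn.
    destruct n. lia. unfold TT, Bf. simpl INR at 2 3. rewrite Rmult_0_r, poch0. unfold Rdiv; ring.
    apply is_lim_seq_const.
  - unfold tt. set (a := alpha * INR (S s)).
    assert (Hap : 0 < a) by (unfold a; apply Rmult_lt_0_compat; auto; apply lt_0_INR; lia).
    pose proof (Gamma_pos a Hap). pose proof (INR_fact_lt_0 (S s)).
    replace (poch (INR m) (S s) * (- lambda0) ^ S s * Rpower x (a - 1) / (INR (fact (S s)) * Gamma a))
      with (cm m (S s) * (- lambda0) ^ S s * Rpower x (a - 1) * / Gamma a)
      by (unfold cm; field; split; lra).
    unfold TT. fold a. apply is_lim_seq_scal_l with (u := Bf a) (lu := Finite (/ Gamma a)).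
    apply Bf_lim; auto.
Qed.

Lemma main_lim alpha lambda0 m x : 0 < alpha -> 0 < lambda0 -> 0 < x ->
  ex_series (tt alpha lambda0 m x) /\
  is_lim_seq (fun n => Series (fun s => TT alpha lambda0 m x s n)) (Series (tt alpha lambda0 m x)).
Proof.
  intros Ha Hl Hx.
  set (C := (INR m + 1) * lambda0 * Rpower x alpha * exp (2 * alpha)).
  assert (HC : 0 < C).
  { unfold C. pose proof (pos_INR m). pose proof (Rpower_pos' x alpha). pose proof (exp_pos (2 * alpha)).
    repeat apply Rmult_lt_0_compat; lra. }
  destruct (choose_N alpha C Ha HC) as [N0 [HN0 Hq]].
  destruct (nat_above (INR N0 / alpha)) as [S0 HS0].
  set (M := fun s : nat => INR N0 / x * (1 / 2) ^ s).
  assert (HM : ex_series M).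
  { unfold M. apply (@ex_series_scal_l R_AbsRing R_NormedModule (INR N0 / x) (fun s => (1/2)^s)). apply ex_series_geom. rewrite Rabs_pos_eq; lra. }
  assert (Hdom : forall s n, (S0 <= s)%nat -> (N0 <= n)%nat -> Rabs (TT alpha lambda0 m x s n) <= M s).
  { intros s n Hs Hn.
    assert (Has : INR N0 <= alpha * INR s).
    { apply Rle_trans with (alpha * INR S0). apply Rmult_le_reg_l with (/ alpha).
      apply Rinv_0_lt_compat; auto. rewrite <- Rmult_assoc, Rinv_l, Rmult_1_l by lra.
      rewrite Rmult_comm. exact HS0. apply Rmult_le_compat_l. lra. apply le_INR; auto. }
    pose proof (cm_bound m s) as [Hc1 Hc2].
    pose proof (Bf_nonneg (alpha * INR s) n ltac:(pose proof (lt_0_INR N0 ltac:(lia)); lra)).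
    pose proof (Bf_tail (alpha * INR s) N0 n HN0 Has Hn).
    unfold TT. rewrite !Rabs_mult, (Rabs_pos_eq (cm m s)), (Rabs_pos_eq (Rpower x _)), (Rabs_pos_eq (Bf _ n)),
      <- RPow_abs, Rabs_Ropp, (Rabs_pos_eq lambda0) by (auto; try apply Rlt_le, Rpower_pos'; lra).
    eapply Rle_trans.
    { apply Rmult_le_compat_l. apply Rmult_le_pos. apply Rmult_le_pos; auto. apply pow_le; lra.
      apply Rlt_le, Rpower_pos'. exact H0. }
    eapply Rle_trans. apply key_bound; auto; lra.
    unfold M. apply Rmult_le_compat_l. apply Rlt_le, Rdiv_lt_0_compat; auto. apply lt_0_INR; lia.
    apply pow_incr. split; [|exact Hq]. apply Rdiv_le_0_compat. apply Rlt_le; exact HC. apply Rpower_pos'. }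
  destruct (tannery (TT alpha lambda0 m x) (tt alpha lambda0 m x) M S0 N0
    (fun s => TT_lim alpha lambda0 m x s Ha Hx) Hdom HM) as [H1 [_ H3]].
  auto.
Qed.

Lemma stmt_eq alpha lambda0 m x n : 0 < x -> (1 <= n)%nat ->
  / (x / INR n) * Ecoef m alpha (lambda0 * Rpower (x / INR n) alpha) n =
  Series (fun s => TT alpha lambda0 m x s n).
Proof.
  intros Hx Hn. assert (Hn0 : 0 < INR n) by (apply lt_0_INR; lia).
  unfold Ecoef. rewrite <- !Series_scal_l. apply Series_ext. intros s.
  set (a := alpha * INR s).
  assert (E1 : (- (lambda0 * Rpower (x / INR n) alpha)) ^ s = (- lambda0) ^ s * (Rpower x a / Rpower (INR n) a)).
  { replace (- (lambda0 * Rpower (x / INR n) alpha)) with ((- lambda0) * Rpower (x / INR n) alpha) by ring.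
    rewrite Rpow_mult_distr. f_equal. rewrite <- Rpower_mult_nat by (apply Rdiv_lt_0_compat; auto).
    apply Rpower_div; auto. }
  assert (E2 : Rpower x (a - 1) = Rpower x a / x).
  { apply Rmult_eq_reg_r with x; [| lra]. rewrite Rpower_m1 by auto. field. lra. }
  assert (E3 : Rpower (INR n) (1 - a) = INR n / Rpower (INR n) a).
  { unfold Rminus. rewrite Rpower_plus, Rpower_Ropp, Rpower_1 by auto. auto. }
  unfold TT, Bf, cm. fold a. rewrite E1, E2, E3.
  pose proof (Rpower_pos' x a). pose proof (Rpower_pos' (INR n) a).
  pose proof (INR_fact_lt_0 n). pose proof (INR_fact_lt_0 s).
  field. repeat split; lra.
Qed.


Definition bb (alpha : R) (m : nat) (s : nat) := cm m s / Gamma (alpha * INR s + 1).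

Lemma term_le_series (a : nat -> R) n : ex_series a -> (forall k, 0 <= a k) -> a n <= Series a.
Proof.
  intros He Hp. rewrite (Series_incr_n a (S n)) by (lia || auto). simpl pred.
  assert (0 <= Series (fun k => a (S n + k)%nat)).
  { assert (Z : Series (fun _ : nat => 0) = 0).
    { rewrite (Series_ext (fun _ : nat => 0) (fun _ : nat => 0 * 0)) by (intros; ring).
      rewrite Series_scal_l. ring. }
    rewrite <- Z. apply Series_le. intros; split; [lra | apply Hp].
    apply (ex_series_incr_n a (S n)); auto. }
  destruct n. change (sum_f_R0 a 0) with (a 0%nat). lra.
  rewrite tech5. assert (0 <= sum_f_R0 a n) by (apply cond_pos_sum; auto). lra.
Qed.

Lemma bb_ex alpha m r : 0 < alpha -> 0 < r -> ex_series (fun s => Rabs (bb alpha m s * r ^ s)).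
Proof.
  intros Ha Hr.
  set (C := (INR m + 1) * r * Rpower 1 alpha * exp (2 * alpha)).
  assert (HC : 0 < C).
  { unfold C. pose proof (pos_INR m). pose proof (Rpower_pos' 1 alpha). pose proof (exp_pos (2 * alpha)).
    repeat apply Rmult_lt_0_compat; lra. }
  destruct (choose_N alpha C Ha HC) as [N0 [HN0 Hq]].
  destruct (nat_above (INR N0 / alpha)) as [S0 HS0].
  apply ex_series_tail_dom with (fun s => INR N0 / 1 * (1 / 2) ^ s) S0.
  2:{ apply (@ex_series_scal_l R_AbsRing R_NormedModule (INR N0 / 1) (fun s => (1/2)^s)). apply ex_series_geom. rewrite Rabs_pos_eq; lra. }
  intros s Hs.
  assert (Has : INR N0 <= alpha * INR s).
  { apply Rle_trans with (alpha * INR S0). apply Rmult_le_reg_l with (/ alpha).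
    apply Rinv_0_lt_compat; auto. rewrite <- Rmult_assoc, Rinv_l, Rmult_1_l by lra.
    rewrite Rmult_comm. exact HS0. apply Rmult_le_compat_l. lra. apply le_INR; auto. }
  assert (HN1 : 1 <= INR N0) by (apply (le_INR 1); auto).
  set (a := alpha * INR s) in *.
  pose proof (Gamma_pos a ltac:(lra)) as HG.
  pose proof (invGamma_bound a N0 HN0 Has) as HiG.
  pose proof (cm_bound m s) as [Hc1 Hc2].
  assert (HG1 : / Gamma (a + 1) <= / Gamma a).
  { rewrite Gamma_rec by lra. rewrite Rinv_mult. rewrite <- (Rmult_1_l (/ Gamma a)) at 2.
    apply Rmult_le_compat_r. apply Rlt_le, Rinv_0_lt_compat; auto.
    rewrite <- Rinv_1. apply Rinv_le_contravar; lra. }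
  pose proof (Gamma_pos (a + 1) ltac:(lra)).
  unfold bb. fold a. rewrite Rabs_Rabsolu, Rabs_pos_eq.
  2:{ apply Rmult_le_pos. apply Rdiv_le_0_compat; lra. apply pow_le; lra. }
  eapply Rle_trans.
  2:{ apply Rmult_le_compat_l. apply Rlt_le, Rdiv_lt_0_compat; lra.
      apply pow_incr. split; [|exact Hq]. apply Rdiv_le_0_compat. apply Rlt_le; exact HC. apply Rpower_pos'. }
  eapply Rle_trans. 2:{ apply (key_bound alpha 1 r m N0 s); auto; lra. }
  fold a. rewrite Rpower_base1, Rmult_1_r.
  unfold Rdiv at 1. rewrite Rmult_assoc, (Rmult_comm (/ _)), <- Rmult_assoc.
  apply Rmult_le_compat_l. apply Rmult_le_pos; auto. apply pow_le; lra.
  eapply Rle_trans; [exact HG1 | exact HiG].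
Qed.

Lemma bb_radius alpha m w : 0 < alpha -> Rbar_lt (Rabs w) (CV_radius (bb alpha m)).
Proof.
  intros Ha. set (r := Rabs w + 1). assert (Hr : 0 < r) by (unfold r; pose proof (Rabs_pos w); lra).
  destruct (CV_radius_bounded (bb alpha m)) as [Hub _].
  assert (HE : Rbar_le r (CV_radius (bb alpha m))).
  { apply Hub. exists (Series (fun s => Rabs (bb alpha m s * r ^ s))). intros n.
    apply (term_le_series (fun s => Rabs (bb alpha m s * r ^ s))). apply bb_ex; auto.
    intros; apply Rabs_pos. }
  eapply Rbar_lt_le_trans; [| exact HE]. simpl. unfold r; lra.
Qed.

Lemma deriv_part alpha lambda0 m x : 0 < alpha -> 0 < x -> ex_series (tt alpha lambda0 m x) ->
  is_derive (fun y => prabhakar (INR m) alpha 1 (- lambda0 * Rpower y alpha)) x (Series (tt alpha lambda0 m x)).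
Proof.
  intros Ha Hx Hex.
  set (w := - lambda0 * Rpower x alpha).
  set (dg := - lambda0 * (alpha * Rpower x (alpha - 1))).
  assert (Hg : is_derive (fun y => - lambda0 * Rpower y alpha) x dg).
  { unfold dg. apply (is_derive_scal (fun y => Rpower y alpha)). apply is_derive_Rpower; auto. }
  assert (HP := is_derive_PSeries (bb alpha m) w (bb_radius alpha m w Ha)).
  assert (HC := is_derive_comp (PSeries (bb alpha m)) (fun y => - lambda0 * Rpower y alpha) x _ _ HP Hg).
  eapply is_derive_eq. eapply is_derive_ext; [| exact HC].
  { intros y. simpl. unfold prabhakar, PSeries. apply Series_ext. intros s. unfold bb, cm. unfold Rdiv. ring. }
  unfold scal; simpl; unfold mult; simpl. unfold PSeries.
  rewrite <- Series_scal_l.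
  rewrite (Series_incr_1 (tt alpha lambda0 m x) Hex). simpl (tt alpha lambda0 m x 0). rewrite Rplus_0_l.
  apply Series_ext. intros k. unfold PS_derive, bb, tt, cm, w, dg.
  set (a := alpha * INR (S k)).
  assert (Hap : 0 < a) by (unfold a; apply Rmult_lt_0_compat; auto; apply lt_0_INR; lia).
  rewrite Gamma_rec by auto. pose proof (Gamma_pos a Hap). pose proof (INR_fact_lt_0 (S k)).
  assert (E : Rpower x (a - 1) = Rpower x (alpha - 1) * Rpower x alpha ^ k).
  { rewrite <- Rpower_mult_nat by auto. rewrite <- Rpower_plus. f_equal. unfold a. rewrite S_INR. ring. }
  rewrite E. replace (- lambda0 * Rpower x alpha) with (- lambda0 * Rpower x alpha) by auto.
  rewrite Rpow_mult_distr. unfold a. rewrite S_INR. simpl pow.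
  assert (Hg0 : Gamma (alpha * (INR k + 1)) <> 0) by (rewrite <- S_INR; fold a; lra). pose proof (pos_INR k).
  field. repeat split; try lra; auto.
Qed.


Theorem mainTheorem12 (alpha lambda0 : R) (m : nat) (x : R) :
  0 < alpha <= 1 -> 0 < lambda0 -> 0 < x ->
  exists L : R,
    is_series (fun s => match s with
                        | O => 0
                        | S _ => poch (INR m) s * (- lambda0) ^ s
                                 * Rpower x (alpha * INR s - 1)
                                 / (INR (Factorial.fact s) * Gamma (alpha * INR s))
                        end) L /\
    is_lim_seq (fun n => / (x / INR n) *
                  Ecoef m alpha (lambda0 * Rpower (x / INR n) alpha) n) L /\
    is_derive (fun y => prabhakar (INR m) alpha 1 (- lambda0 * Rpower y alpha)) x L.
Proof.
  intros Ha Hl Hx. destruct (main_lim alpha lambda0 m x (proj1 Ha) Hl Hx) as [Hex Hlim].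
  exists (Series (tt alpha lambda0 m x)). split; [| split].
  - exact (Series_correct _ Hex).
  - eapply is_lim_seq_ext_loc; [| exact Hlim].
    exists 1%nat. intros n Hn. symmetry. apply stmt_eq; auto.
  - apply deriv_part; auto. apply Ha.
Qed.
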